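(* Let $p\ge1$ and let $u,v\in E_1$ be such that the sequences $(d^u_n)_{n}$ and $(d^v_n)_{n}$ are compatible. Then $\mathcal L^u$ and $\mathcal L^v$ are compatible.
   Context: $X=\{0,\dots,p\}$; $\mathcal G_{S_p}$ is generated by $e_1,\dots,e_p$ acting on $X^\infty$ by $e_i(0w)=i\,e_i(w)$, $e_i(iw)=0w$, $e_i(jw)=jw$ for $j\notin\{0,i\}$; $\Gamma^p_w$ is the Schreier graph on the orbit of $w$ (edges $x$—$e_i(x)$), with graph distance $d$. $E_1$ is the set of $w$ with $\Gamma^p_w$ one-ended; each $w\in E_1$ has an infinite decomposition $w=0^ka_1u_1a_2u_2\cdots$ ($k\ge0$, $a_j\in\{1,\dots,p\}$, $a_{j+1}\ne a_j$, $u_j\in\{0,a_j\}^\ast$ finite). Let $N_j=k+j+\sum_{\ell\le j}|u_\ell|$. The path of cycles of $w$ consists of the $e_{a_j}$-cycles $P^w_j$ with vertex sets $\{0,a_j\}^{N_j}a_{j+1}u_{j+1}\cdots$; $\mathcal L^w=(2^{N_j})_{j\ge1}$. Put $w(0)=w$ and $w(j)=0^{N_j}a_{j+1}u_{j+1}a_{j+2}u_{j+2}\cdots$ (the common vertex of $P^w_j$ and $P^w_{j+1}$), and $d^w_j=d(w(j-1),w(j))$ for $j\ge1$. Integer sequences $(x_i),(y_i)$ are compatible if there exist $l,h$ with $x_{l+n}=y_{h+n}$ for all $n$. *)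

(* Defs.v *)
From Stdlib Require List.
From Stdlib Require Import ClassicalEpsilon.
From mathcomp Require Import all_boot.

Set Implicit Arguments.
Unset Strict Implicit.
Unset Printing Implicit Defensive.

(* Alphabet X = {0,...,p} is 'I_p.+1; infinite words X^oo are nat -> 'I_p.+1. *)
Definition word (p : nat) := nat -> 'I_p.+1.

(* The generator e_i (meaningful for i in {1..p}):
   e_i(0w) = i e_i(w), e_i(iw) = 0w, e_i(jw) = jw for j not in {0,i}. *)
Definition gen (p : nat) (i : 'I_p.+1) (w : word p) : word p :=
  fun n =>
    if all (fun t => w t == ord0) (iota 0 n) then
      (if w n == ord0 then i else if w n == i then ord0 else w n)
    else w n.

Definition adj (p : nat) (x y : word p) : Prop :=
  exists i : 'I_p.+1, i != ord0 /\ (y = gen i x \/ x = gen i y).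

Fixpoint walk (p : nat) (n : nat) (x y : word p) : Prop :=
  match n with
  | 0 => x = y
  | n'.+1 => exists z, adj x z /\ walk n' z y
  end.

(* vertex set of the Schreier graph Gamma_w: the orbit of w *)
Definition in_orbit (p : nat) (w x : word p) : Prop := exists n, walk n w x.

(* graph distance d(x,y) (0 if x,y lie in different orbits; never used then) *)
Definition walkb (p : nat) (x y : word p) (n : nat) : bool :=
  if excluded_middle_informative (walk n x y) then true else false.

Definition dist (p : nat) (x y : word p) : nat :=
  match excluded_middle_informative (exists n, walkb x y n) with
  | left H => ex_minn H
  | right _ => 0
  end.

Fixpoint walk_avoid (p : nat) (K : list (word p)) (n : nat) (x y : word p)
  : Prop :=
  match n with
  | 0 => x = y /\ ~ List.In x K
  | n'.+1 => ~ List.In x K /\ exists z, adj x z /\ walk_avoid K n' z y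
  end.

Definition conn_off (p : nat) (K : list (word p)) (x y : word p) : Prop :=
  exists n, walk_avoid K n x y.

Definition infinite_comp (p : nat) (K : list (word p)) (x : word p) : Prop :=
  forall s : list (word p), exists y, conn_off K x y /\ ~ List.In y s.

Definition one_ended (p : nat) (w : word p) : Prop :=
  forall K : list (word p),
    exists x, in_orbit w x /\ infinite_comp K x /\
      forall y, in_orbit w y -> infinite_comp K y -> conn_off K x y.

Definition E1 (p : nat) (w : word p) : Prop := one_ended w.

(* Decomposition data w = 0^k a_1 u_1 a_2 u_2 ... (indices j >= 1 are used;
   the values a 0, u 0 are irrelevant). *)
Definition Nj (p : nat) (k : nat) (u : nat -> seq 'I_p.+1) (j : nat) : nat :=
  k + j + \sum_(1 <= l < j.+1) size (u l).

Definition is_decomp (p : nat) (w : word p) (k : nat) (a : nat -> 'I_p.+1)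
  (u : nat -> seq 'I_p.+1) : Prop :=
  (forall n, n < k -> w n = ord0) /\
  (forall j, 1 <= j ->
     [/\ a j != ord0,
         a j.+1 != a j,
         all (fun x => (x == ord0) || (x == a j)) (u j),
         w (Nj k u j.-1) = a j &
         forall t, t < size (u j) -> w (Nj k u j.-1 + 1 + t) = nth ord0 (u j) t]).

(* w(0) = w, w(j) = 0^{N_j} a_{j+1} u_{j+1} ... *)
Definition wj (p : nat) (w : word p) (k : nat) (u : nat -> seq 'I_p.+1)
  (j : nat) : word p :=
  if j is 0 then w else fun n => if n < Nj k u j then ord0 else w n.

(* (d^w_j)_{j>=1}, reindexed from 0: dseq n = d^w_{n+1} *)
Definition dseq (p : nat) (w : word p) (k : nat) (u : nat -> seq 'I_p.+1)
  (n : nat) : nat :=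
  dist (wj w k u n) (wj w k u n.+1).

(* L^w = (2^{N_j})_{j>=1}, reindexed from 0 *)
Definition Lseq (p : nat) (k : nat) (u : nat -> seq 'I_p.+1) (n : nat) : nat :=
  2 ^ Nj k u n.+1.

Definition compatible (x y : nat -> nat) : Prop :=
  exists l h, forall n, x (l + n) = y (h + n).

(* Main.v *)
Require Import Defs.
From mathcomp Require Import all_boot zify.
From Stdlib Require Import FunctionalExtensionality ClassicalEpsilon.
Set Implicit Arguments. Unset Strict Implicit.

Section S.
Variable p : nat.
Implicit Types z x y : word p.

Definition shift z : word p := fun n => z n.+1.

Lemma gen0 i z : gen i z 0 = if z 0 == ord0 then i else if z 0 == i then ord0 else z 0.
Proof. by rewrite /gen /=. Qed.

Lemma gen_shift i z : shift (gen i z) = if z 0 == ord0 then gen i (shift z) else shift z.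
Proof.
apply: functional_extensionality => n.
rewrite /shift /gen.
have -> : iota 0 n.+1 = 0 :: [seq 1 + t | t <- iota 0 n] by rewrite -iotaDl.
rewrite /= all_map.
by case: (z 0 =P ord0) => H0 /=.
Qed.

Variable a : 'I_p.+1.
Hypothesis Ha : a != ord0.

Definition badl (c : 'I_p.+1) := (c != ord0) && (c != a).
Fixpoint anybad N z := if N is N'.+1 then badl (z 0) || anybad N' (shift z) else false.
Fixpoint G N z : nat := if N is N'.+1 then ((z 0 != a) || anybad N' (shift z)) + 2 * G N' (shift z) else 0.

Lemma G_lt N z : G N z < 2 ^ N.
Proof. elim: N z => [|N IH] z //=. have := IH (shift z). rewrite expnS. case: (_ || _) => /=; lia. Qed.

Lemma anybad_gena N z : anybad N (gen a z) = anybad N z.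
Proof.
elim: N z => [|N IH] z //=.
rewrite gen_shift gen0.
case: (z 0 =P ord0) => H0.
  by rewrite IH /badl H0 eqxx Ha.
case: (z 0 =P a) => Ha0 //.
by rewrite /badl Ha0 !eqxx andbF.
Qed.

Lemma mod_aux u m : u < m -> 2 * ((u + 1) %% m) = (2 * u + 2) %% (2 * m).
Proof.
move=> H. case: (ltngtP (u + 1) m) => H1.
- rewrite !modn_small //; lia.
- lia.
- rewrite H1 modnn. have -> : 2 * u + 2 = 2 * m by lia. by rewrite modnn.
Qed.

Lemma G_gen_both N : forall z,
  (forall i, (i != a) || anybad N z -> G N (gen i z) = G N z) /\
  (~~ anybad N z -> G N (gen a z) = (G N z + 1) %% 2 ^ N).
Proof.
elim: N => [|N IH] z.
  by split => //= _; rewrite modn1.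
have [IH1 IH2] := IH (shift z).
have Ha0 : (ord0 != a) by rewrite eq_sym.
split.
  move=> i /=; rewrite gen_shift gen0.
  case: (z 0 =P ord0) => H0.
    have hb : badl (z 0) = false by rewrite /badl H0 eqxx.
    rewrite hb H0 /= => Hi. rewrite Ha0 IH1 //.
    case: (i =P a) Hi => [->|Hia] /= Hi.
      by rewrite anybad_gena Hi.
    done.
  case: (z 0 =P i) => Hzi //.
  rewrite Ha0 /= => Hi.
  suff -> : (z 0 != a) || anybad N (shift z) by [].
  move: Hi; rewrite /badl -Hzi. by case: (z 0 != a); rewrite ?andbF.
rewrite /= gen_shift gen0.
case: (z 0 =P ord0) => H0.
  have hb : badl (z 0) = false by rewrite /badl H0 eqxx.
  rewrite hb H0 /= => Hn. rewrite Ha0 eqxx /= anybad_gena (negbTE Hn) IH2 // add0n.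
  rewrite mod_aux; last exact: G_lt. rewrite expnS. by rewrite -addnA addn1 addnC.
rewrite /badl negb_or => /andP [Hb Hn].
have Hza : z 0 = a.
  move: Hb. rewrite negb_and !negbK. case/orP => /eqP //.
rewrite Hza eqxx (negbTE Hn) Ha0 /=.
  rewrite modn_small; first lia. have := G_lt N (shift z). rewrite expnS. lia.
Qed.

Lemma G_gen N z i : (i != a) || anybad N z -> G N (gen i z) = G N z.
Proof. exact: (G_gen_both N z).1. Qed.
Lemma G_gena N z : ~~ anybad N z -> G N (gen a z) = (G N z + 1) %% 2 ^ N.
Proof. exact: (G_gen_both N z).2. Qed.

Lemma adj_G N x z : adj x z ->
  G N z = G N x \/ G N z = (G N x + 1) %% 2^N \/ G N x = (G N z + 1) %% 2^N.
Proof.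
case=> i [Hi [->|->]].
- case E: ((i != a) || anybad N x).
    by left; apply: G_gen.
  right; left. move/negbT: E; rewrite negb_or negbK => /andP[/eqP -> Hn].
  exact: G_gena.
- case E: ((i != a) || anybad N z).
    by left; rewrite G_gen.
  right; right. move/negbT: E; rewrite negb_or negbK => /andP[/eqP -> Hn].
  exact: G_gena.
Qed.

Definition cd M u v := minn (u - v + (v - u)) (M - (u - v + (v - u))).

Lemma modS1 u M : u < M -> (u + 1) %% M = u + 1 \/ (u + 1 = M /\ (u+1) %% M = 0).
Proof.
move=> H. case: (ltngtP (u+1) M) => H1.
- left; rewrite modn_small //.
- lia.
- by right; rewrite H1 modnn.
Qed.

Lemma lower N n x y : walk n x y -> cd (2^N) (G N x) (G N y) <= n.
Proof.
elim: n x => [|n IH] x /=.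
  move=> ->. rewrite /cd; lia.
case=> w [Hxw Hw]. have H := IH _ Hw. have E := adj_G N Hxw.
have hx := G_lt N x; have hw := G_lt N w; have hy := G_lt N y.
move: H E hx hw hy. rewrite /cd.
move: (G N x) (G N w) (G N y) => gx gw gy H E hx hw hy.
case: E => [E|[E|E]].
- lia.
- have [e|[e1 e2]] := modS1 hx; rewrite ?e ?e2 in E; lia.
- have [e|[e1 e2]] := modS1 hw; rewrite ?e ?e2 in E; lia.
Qed.

Lemma adj_sym x y : adj x y -> adj y x.
Proof. case=> i [Hi H]; exists i; split => //; tauto. Qed.

Lemma walk_snoc n x y z : walk n x y -> adj y z -> walk n.+1 x z.
Proof.
elim: n x => [|n IH] x /=.
  by move=> -> H; exists z; split.
case=> w [H1 H2] H3. exists w. split => //. exact: IH.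
Qed.

Lemma walk_sym n x y : walk n x y -> walk n y x.
Proof.
elim: n x => [|n IH] x /=. by move->.
case=> w [H1 H2]. exact: walk_snoc (IH _ H2) (adj_sym H1).
Qed.

Definition pre N z := forall t, t < N -> (z t == ord0) || (z t == a).

Lemma pre_shift N z : pre N.+1 z -> pre N (shift z).
Proof. by move=> H t Ht; apply: H. Qed.

Lemma noBad N z : pre N z -> anybad N z = false.
Proof.
elim: N z => [|N IH] z //= H.
rewrite IH; last exact: pre_shift.
have := H 0 isT. rewrite /badl orbF. by case/orP => /eqP ->; rewrite ?eqxx ?andbF.
Qed.

Lemma gena_pre N z : pre N z -> z N != ord0 -> z N != a ->
  pre N (gen a z) /\ forall t, N <= t -> gen a z t = z t.
Proof.
move=> H HN0 HNa. split.
  move=> t Ht. have := H t Ht. rewrite /gen. case: ifP => _ //.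
  case/orP => /eqP ->. by rewrite !eqxx orbT.
  by rewrite (negbTE Ha) !eqxx.
move=> t Ht. rewrite /gen. case: ifP => // Hall.
case: (ltngtP N t) => Ht'.
- have : N \in iota 0 t by rewrite mem_iota.
  move/(allP Hall)/eqP => hz. by rewrite hz eqxx in HN0.
- lia.
- by rewrite -Ht' (negbTE HN0) (negbTE HNa).
Qed.

Lemma iter_walk N y k z : pre N z -> y N != ord0 -> y N != a ->
  (forall t, N <= t -> z t = y t) ->
  [/\ walk k z (iter k (gen a) z), G N (iter k (gen a) z) = (G N z + k) %% 2^N,
      pre N (iter k (gen a) z) & (forall t, N <= t -> iter k (gen a) z t = y t)].
Proof.
move=> + Hy0 Hya. elim: k z => [|k IH] z Hz Ht.
  split => //=. by rewrite addn0 modn_small // G_lt.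
rewrite iterSr.
have HzN : z N = y N by apply: Ht.
have Hz0 : z N != ord0 by rewrite HzN.
have Hza : z N != a by rewrite HzN.
have [P1 T1] := gena_pre Hz Hz0 Hza.
have [W G1 P2 T2] := IH (gen a z) P1 (fun t h => etrans (T1 t h) (Ht t h)).
split => //.
  exists (gen a z); split => //. by exists a; split => //; left.
rewrite G1 G_gena ?noBad // modnDml. congr (_ %% _). lia.
Qed.

Lemma G_inj N z z' : pre N z -> pre N z' -> G N z = G N z' -> forall t, t < N -> z t = z' t.
Proof.
elim: N z z' => [|N IH] z z' // Hz Hz' /=.
rewrite !noBad; try exact: pre_shift.
move=> E.
have Eb : (z 0 != a) = (z' 0 != a).
  by move: E; case: (z 0 != a); case: (z' 0 != a) => //= E; lia.
rewrite Eb in E. have EG : G N (shift z) = G N (shift z') by lia.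
case=> [|t] Ht.
  have := Hz 0 isT; have := Hz' 0 isT.
  case/orP => /eqP e1; case/orP => /eqP e2; rewrite ?e1 ?e2 //; rewrite e1 e2 in Eb.
  - by rewrite eqxx eq_sym (negbTE Ha) in Eb.
  - by rewrite eqxx eq_sym (negbTE Ha) in Eb.
exact: (IH (shift z) (shift z') (pre_shift Hz) (pre_shift Hz') EG t Ht).
Qed.

Lemma reach N y x k : pre N x -> pre N y -> y N != ord0 -> y N != a ->
  (forall t, N <= t -> x t = y t) -> (G N x + k) %% 2^N = G N y -> walk k x y.
Proof.
move=> Hx Hy Hy0 Hya Ht E.
have [W Gi Pi Ti] := iter_walk k Hx Hy0 Hya Ht.
suff <- : iter k (gen a) x = y by [].
apply: functional_extensionality => t. case: (ltnP t N) => h; last exact: Ti.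
apply: (G_inj Pi Hy) => //. by rewrite Gi.
Qed.

Lemma dist_eq x y n : walk n x y -> (forall m, walk m x y -> n <= m) -> dist x y = n.
Proof.
move=> W Hm. rewrite /dist.
case: excluded_middle_informative => [H|H]; last first.
  exfalso; apply: H; exists n; rewrite /walkb; by case: excluded_middle_informative.
case: ex_minnP => m Hwm Hmin.
have Wm : walk m x y by move: Hwm; rewrite /walkb; case: excluded_middle_informative.
apply/eqP; rewrite eqn_leq Hm // andbT. apply: Hmin.
rewrite /walkb; by case: excluded_middle_informative.
Qed.

Lemma dist_cd N x y : pre N x -> pre N y -> y N != ord0 -> y N != a ->
  (forall t, N <= t -> x t = y t) -> dist x y = cd (2^N) (G N x) (G N y).
Proof.
move=> Hx Hy Hy0 Hya Ht.
have HxN : x N = y N by apply: Ht.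
have Hx0 : x N != ord0 by rewrite HxN.
have Hxa : x N != a by rewrite HxN.
have Ht' : forall t, N <= t -> y t = x t by move=> t h; rewrite Ht.
apply: dist_eq; last by move=> m /lower.
have hx := G_lt N x; have hy := G_lt N y.
have W1 : walk (G N x - G N y + (G N y - G N x)) x y.
  case: (leqP (G N x) (G N y)) => h.
    apply: (reach (N:=N)) => //. have -> : G N x + (G N x - G N y + (G N y - G N x)) = G N y by lia.
    by rewrite modn_small.
  apply: walk_sym. apply: (reach (N:=N)) => //.
  have -> : G N y + (G N x - G N y + (G N y - G N x)) = G N x by lia.
  by rewrite modn_small.
have W2 : walk (2^N - (G N x - G N y + (G N y - G N x))) x y.
  case: (leqP (G N x) (G N y)) => h.
    apply: walk_sym. apply: (reach (N:=N)) => //.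
    have -> : G N y + (2^N - (G N x - G N y + (G N y - G N x))) = 2^N + G N x by lia.
    by rewrite modnDl modn_small.
  apply: (reach (N:=N)) => //.
  have -> : G N x + (2^N - (G N x - G N y + (G N y - G N x))) = 2^N + G N y by lia.
  by rewrite modnDl modn_small.
rewrite /cd /minn. by case: ifP.
Qed.

End S.

Section T.
Variable p : nat.
Variable a : 'I_p.+1.
Hypothesis Ha : a != ord0.

Lemma Gzero N (z : word p) : (forall t, t < N -> z t = ord0) -> G a N z = 2^N - 1.
Proof.
elim: N z => [|N IH] z //= H.
rewrite IH; last by move=> t ht; apply: (H t.+1).
rewrite H // eq_sym Ha /=. have := expn_gt0 2 N. rewrite expnS. lia.
Qed.

Lemma Gform m N (z : word p) : m < N -> (forall t, t < m -> z t = ord0) -> z m = a ->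
  pre a N z -> exists q, G a N z = 2^m - 1 + 2^m.+1 * q.
Proof.
elim: m N z => [|m IH] [|N] z //= hm H0 Hm Hp.
  rewrite noBad //; last exact: pre_shift.
  rewrite Hm eqxx /=. by exists (G a N (shift z)).
have [q Hq] := IH N (shift z) hm (fun t ht => H0 t.+1 ht) Hm (pre_shift Hp).
rewrite Hq H0 // eq_sym Ha /=. exists q.
have := expn_gt0 2 m. rewrite !expnS.
move: (2^m) => P. nia.
Qed.
End T.

Lemma arith m N q : m < N -> 2^m - 1 + 2^m.+1 * q < 2^N ->
  exists r, cd (2^N) (2^m - 1 + 2^m.+1 * q) (2^N - 1) = 2^m * (2*r+1).
Proof.
move=> hmN.
have HM : 2^N = 2 * 2^m * 2^(N - m.+1) by rewrite -expnS -expnD subnKC.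
rewrite HM expnS.
have P1 := expn_gt0 2 m.
move: (2^m) (2^(N - m.+1)) P1 => P E P1 H.
have hq : q < E.
  have : P * (2 * q + 1) <= P * (2 * E) by nia.
  rewrite leq_pmul2l //. lia.
have [r0 ->] : exists r0, E = q + 1 + r0 by exists (E - q - 1); lia.
rewrite /cd.
case: (leqP r0 q) => h.
  exists r0. have : P * r0 <= P * q by rewrite leq_mul2l h orbT. nia.
exists q. have : P * q <= P * r0 by rewrite leq_mul2l (ltnW h) orbT. nia.
Qed.

Lemma v2 x c r s : 2^x * (2*r+1) = 2^c * (2*s+1) -> x = c.
Proof.
elim: x c => [|x IH] [|c] //=; rewrite ?expnS.
- rewrite -mulnA. lia.
- rewrite -mulnA. lia.
- rewrite -!mulnA => /eqP; rewrite eqn_mul2l /= => /eqP /IH ->. done.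
Qed.

Lemma wj_eq p (w : word p) k (u : nat -> seq 'I_p.+1) :
  (forall n, n < k -> w n = ord0) -> forall n t,
  wj w k u n t = if t < Nj k u n then ord0 else w t.
Proof.
move=> Hk [|n] t //=.
rewrite /Nj big_geq // !addn0. by case: ifP => // /Hk ->.
Qed.

Lemma dseq_form p (w : word p) k a u : is_decomp w k a u ->
  forall n, exists r, dseq w k u n = 2^(Nj k u n) * (2*r+1).
Proof.
move=> [Hk Hj] n.
have [b0 bn ball bw bu] := Hj n.+1 isT.
have [c0 _ _ cw _] := Hj n.+2 isT.
simpl in bw, bu, cw.
have HN : Nj k u n.+1 = Nj k u n + 1 + size (u n.+1).
  rewrite /Nj big_nat_recr //=. lia.
have Hx := wj_eq u Hk n. have Hy := wj_eq u Hk n.+1.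
have Hlt : Nj k u n < Nj k u n.+1 by lia.
rewrite /dseq.
rewrite (dist_cd b0 (N:=Nj k u n.+1)) //.
- rewrite (Gzero b0 (z:=wj w k u n.+1)); last by move=> t ht; rewrite Hy ht.
  have hpx : pre (a n.+1) (Nj k u n.+1) (wj w k u n).
    move=> t ht. rewrite Hx. case: ifP => [_|/negbT]; first by rewrite eqxx.
    rewrite -leqNgt leq_eqVlt => /orP [/eqP <-|h]; first by rewrite bw eqxx orbT.
    have [s -> hs] : exists2 s, t = Nj k u n + 1 + s & s < size (u n.+1).
      exists (t - (Nj k u n + 1)); lia.
    rewrite bu //. exact: (all_nthP ord0 ball).
  have h1 : forall t, t < Nj k u n -> wj w k u n t = ord0 by move=> t ht; rewrite Hx ht.
  have h2 : wj w k u n (Nj k u n) = a n.+1 by rewrite Hx ltnn bw.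
  have [q Hq] := Gform b0 Hlt h1 h2 hpx.
  rewrite Hq. apply: arith => //. rewrite -Hq. exact: (G_lt b0).
- move=> t ht. rewrite Hx. case: ifP => [_|/negbT]; first by rewrite eqxx.
  rewrite -leqNgt leq_eqVlt => /orP [/eqP <-|h]; first by rewrite bw eqxx orbT.
  have [s -> hs] : exists2 s, t = Nj k u n + 1 + s & s < size (u n.+1).
    exists (t - (Nj k u n + 1)); lia.
  rewrite bu //. exact: (all_nthP ord0 ball).
- by move=> t ht; rewrite Hy ht eqxx.
- by rewrite Hy ltnn cw.
- by rewrite Hy ltnn cw.
- move=> t ht. rewrite Hx Hy. have -> : (t < Nj k u n) = false by lia.
  by have -> : (t < Nj k u n.+1) = false by lia.
Qed.

Theorem proposition4p20 (p : nat) (hp : 1 <= p) (u v : word p)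
  (ku : nat) (au : nat -> 'I_p.+1) (uu : nat -> seq 'I_p.+1)
  (kv : nat) (av : nat -> 'I_p.+1) (uv : nat -> seq 'I_p.+1) :
  E1 u -> E1 v ->
  is_decomp u ku au uu -> is_decomp v kv av uv ->
  compatible (dseq u ku uu) (dseq v kv uv) ->
  compatible (Lseq ku uu) (Lseq kv uv).
Proof.
move=> _ _ Hu Hv [l [h H]]. exists l, h => n. rewrite /Lseq.
have := H n.+1.
have [r1 ->] := dseq_form Hu (l + n.+1).
have [r2 ->] := dseq_form Hv (h + n.+1).
by move/v2; rewrite !addnS => ->.
Qed.
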